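(* Let $q=12n+1$ be a prime power and let $C^6$ be the subgroup of index $6$ of the multiplicative group $\mathbb{F}_q^*$. Assume there is a $16$-tuple $(a_1,\dots,a_{16})$ of elements of $\mathbb{F}_q^*$ such that: (i) each of the four lists $\Delta_{0,0}=(a_1-a_2,\ a_5-a_6,\ a_{10}-a_{11},\ a_{10}-a_{12},\ a_{11}-a_{12},\ a_{15}-a_{16})$, $\Delta_{0,1}=(a_1-a_3,\ a_2-a_3,\ a_5-a_7,\ a_6-a_7,\ a_{14}-a_{15},\ a_{14}-a_{16})$, $\Delta_{1,0}=(a_1-a_4,\ a_2-a_4,\ a_5-a_8,\ a_6-a_8,\ a_{13}-a_{15},\ a_{13}-a_{16})$, $\Delta_{1,1}=(a_3-a_4,\ a_7-a_8,\ a_9-a_{10},\ a_9-a_{11},\ a_9-a_{12},\ a_{13}-a_{14})$ is a complete system of representatives for the cosets of $C^6$ in $\mathbb{F}_q^*$ (i.e. its six entries lie in six distinct cosets); and (ii) each of the four lists $U_{0,0}=(a_1,a_2,a_5,a_6,a_9)$, $U_{0,1}=(a_3,a_7,a_{13})$, $U_{1,0}=(a_4,a_8,a_{14})$, $U_{1,1}=(a_{10},a_{11},a_{12},a_{15},a_{16})$ is a partial system of representatives for the cosets of $C^6$ in $\mathbb{F}_q^*$ distinct from $C^6$ (i.e. its entries lie in pairwise distinct cosets, none of which is $C^6$). Then there exists a nested $(4q,4,1)$-BIBD.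
   Context: A $(v,k,\lambda)$-BIBD is a set $X$ of $v$ points with a multiset $\mathcal{A}$ of $k$-subsets such that every pair of distinct points lies in exactly $\lambda$ blocks (partial: at most $\lambda$). A $(v,4,1)$-BIBD is nested if there is a map $\phi:\mathcal{A}\to X$ such that $\{A\cup\{\phi(A)\}:A\in\mathcal{A}\}$ is the block multiset of a partial $(v,5,2)$-BIBD on $X$ (in particular $\phi(A)\notin A$). *)

(* Defs.v *)
From HB Require Import structures.
From mathcomp Require Import all_boot all_order all_algebra.
Set Implicit Arguments. Unset Strict Implicit. Unset Printing Implicit Defensive.
Import GRing.Theory.
Local Open Scope ring_scope.

(* The subgroup C^6 of index 6 of F^* : the nonzero sixth powers.
   (When 6 divides |F^*|, this is the unique subgroup of index 6 of the cyclic group F^*.) *)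
Definition C6 (F : finFieldType) : {set F} :=
  [set y : F | [exists x : F, (x != 0) && (y == x ^+ 6)]].

Definition same_coset6 (F : finFieldType) (x y : F) : bool := x / y \in C6 F.

Definition distinct_cosets6 (F : finFieldType) (s : seq F) : bool :=
  all (fun x => x != 0) s && pairwise (fun x y => ~~ same_coset6 x y) s.

Definition complete_rep6 (F : finFieldType) (s : seq F) : bool :=
  (size s == 6%N) && distinct_cosets6 s.

Definition partial_rep6 (F : finFieldType) (s : seq F) : bool :=
  distinct_cosets6 s && all (fun x => x \notin C6 F) s.

(* Designs on the point set 'I_v; blocks form a multiset, given as a seq. *)
Definition BIBD (v k lam : nat) (B : seq {set 'I_v}) : Prop :=
  all (fun A : {set 'I_v} => #|A| == k) B /\
  forall x y : 'I_v, x != y ->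
    count (fun A : {set 'I_v} => (x \in A) && (y \in A)) B = lam.

Definition partial_BIBD (v k lam : nat) (B : seq {set 'I_v}) : Prop :=
  all (fun A : {set 'I_v} => #|A| == k) B /\
  forall x y : 'I_v, x != y ->
    (count (fun A : {set 'I_v} => (x \in A) && (y \in A)) B <= lam)%N.

(* Nested (v,4,1)-BIBD: phi assigns to each block (occurrence) a point phi(A),
   listed in parallel with B. *)
Definition nested_BIBD (v : nat) (B : seq {set 'I_v}) : Prop :=
  BIBD 4 1 B /\
  exists phi : seq 'I_v,
    size phi = size B /\
    all (fun p : {set 'I_v} * 'I_v => p.2 \notin p.1) (zip B phi) /\
    partial_BIBD 5 2 [seq p.1 :|: [set p.2] | p : {set 'I_v} * 'I_v <- zip B phi].

Definition exists_nested_BIBD (v : nat) : Prop :=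
  exists B : seq {set 'I_v}, nested_BIBD B.

(* Main.v *)
Require Import Defs.
From HB Require Import structures.
From mathcomp Require Import all_boot all_order all_algebra.
From mathcomp Require Import all_fingroup all_solvable all_field zify ring.
Set Implicit Arguments. Unset Strict Implicit.
Import GRing.Theory.
Local Open Scope ring_scope.


Lemma C6_neq0 {F : finFieldType} {x : F} : x \in C6 F -> x != 0.
Proof. by rewrite inE => /existsP[y /andP[y0 /eqP ->]]; rewrite expf_neq0. Qed.

Lemma C6_mul {F : finFieldType} {x y : F} : x \in C6 F -> y \in C6 F -> x * y \in C6 F.
Proof.
rewrite /C6 !inE => /existsP[u /andP[u0 /eqP ->]] /existsP[v /andP[v0 /eqP ->]].
by apply/existsP; exists (u * v); rewrite mulf_neq0 // exprMn eqxx.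
Qed.

Lemma C6_inv {F : finFieldType} {x : F} : x \in C6 F -> x^-1 \in C6 F.
Proof.
rewrite /C6 !inE => /existsP[u /andP[u0 /eqP ->]].
by apply/existsP; exists u^-1; rewrite invr_eq0 u0 exprVn eqxx.
Qed.

Lemma C6_pow {F : finFieldType} (x : F) : x != 0 -> x ^+ 6 \in C6 F.
Proof. by move=> x0; rewrite inE; apply/existsP; exists x; rewrite x0 eqxx. Qed.

Lemma C6_div {F : finFieldType} {x y : F} : x \in C6 F -> y \in C6 F -> x / y \in C6 F.
Proof. by move=> hx hy; apply: C6_mul => //; apply: C6_inv. Qed.

Lemma size_filter_enum (T : finType) (p : pred T) : size [seq x <- enum T | p x] = #|p|.
Proof.
rewrite -(card_uniqP (filter_uniq _ (enum_uniq T))).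
by apply: eq_card => x; rewrite mem_filter mem_enum andbT.
Qed.

Lemma unit_pow {F : finFieldType} {n : nat} : #|F| = (12 * n + 1)%N ->
  forall x : F, x != 0 -> x ^+ (12 * n) = 1.
Proof.
move=> hF x x0.
have := expf_card x; rewrite hF addn1 exprS => /eqP.
move=> h; apply: (mulfI x0); rewrite mulr1; exact/eqP.
Qed.

Lemma group_facts (F : finFieldType) (n : nat) : #|F| = (12 * n + 1)%N ->
  [/\ (0 < n)%N, -1 \in C6 F, (1 : F) != -1 &
   exists z : F, forall x : F, x != 0 -> exists i : 'I_6, x / z ^+ i \in C6 F].
Proof.
move=> hF.
have n0 : (0 < n)%N.
  have := finNzRing_gt1 F; rewrite hF; case: n {hF} => //.
pose rs := [seq x <- enum F | x != 0].
have szrs : size rs = (12 * n)%N.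
  by rewrite size_filter_enum cardC1 hF addn1.
have : has (12 * n).-primitive_root rs.
  apply: has_prim_root; first by rewrite muln_gt0.
  - apply/allP => x; rewrite mem_filter => /andP[x0 _].
    by rewrite unity_rootE (unit_pow hF x0).
  - by rewrite filter_uniq ?enum_uniq.
  - by rewrite szrs.
case/hasP => z _ pz.
have z0 : z != 0.
  apply/negP => /eqP z0; have := prim_expr_order pz.
  rewrite z0 expr0n muln_eq0 /= (negPf (lt0n_neq0 n0)) => /eqP; rewrite eq_sym oner_eq0 //.
have z6n1 : z ^+ (6 * n) != 1.
  rewrite -(prim_order_dvd pz); apply/negP => /dvdn_leq.
  rewrite muln_gt0 n0 => /(_ isT); rewrite leq_pmul2r //.
have z6 : z ^+ (6 * n) = -1.
  have : (z ^+ (6 * n)) ^+ 2 == 1.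
    by rewrite -exprM mulnAC (prim_expr_order pz).
  by rewrite sqrf_eq1 (negPf z6n1) /= => /eqP.
split => //.
- by rewrite -z6 mulnC exprM C6_pow // expf_neq0.
- by rewrite -z6 eq_sym.
exists z => x x0.
have [i ->] := prim_rootP pz (unit_pow hF x0).
have i6 : (i %% 6 < 6)%N by rewrite ltn_mod.
exists (Ordinal i6) => /=.
rewrite {1}(divn_eq i 6) exprD mulfK ?expf_neq0 //.
by rewrite exprM C6_pow // expf_neq0.
Qed.

Lemma same_sym {F : finFieldType} (x y : F) : same_coset6 x y -> same_coset6 y x.
Proof. by rewrite /same_coset6 => /C6_inv; rewrite invf_div. Qed.

Lemma same_trans {F : finFieldType} (x y w : F) :
  same_coset6 x y -> same_coset6 y w -> same_coset6 x w.
Proof.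
rewrite /same_coset6 => h1 h2.
have y0 : y != 0 by apply: contraTneq h1 => ->; rewrite invr0 mulr0; apply/negP => /C6_neq0; rewrite eqxx.
by have := C6_mul h1 h2; rewrite mulrA divfK.
Qed.

Lemma same_oppr {F : finFieldType} (x y : F) : -1 \in C6 F ->
  same_coset6 x (- y) = same_coset6 x y.
Proof.
move=> m1; rewrite /same_coset6 invrN mulrN.
apply/idP/idP => h.
  by have := C6_mul m1 h; rewrite mulN1r opprK.
by have := C6_mul m1 h; rewrite mulN1r.
Qed.

Lemma same_refl {F : finFieldType} (x : F) : x != 0 -> same_coset6 x x.
Proof. by move=> x0; rewrite /same_coset6 divff // -(expr1n _ 6) C6_pow // oner_eq0. Qed.

Lemma pigeon {F : finFieldType} (z : F) :
  (forall x : F, x != 0 -> exists i : 'I_6, x / z ^+ i \in C6 F) ->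
  forall s : seq F, distinct_cosets6 s -> (size s <= 6)%N.
Proof.
move=> cov s.
pose cls (x : F) : 'I_6 := odflt ord0 [pick i : 'I_6 | x / z ^+ i \in C6 F].
have clsP x : x != 0 -> x / z ^+ (cls x) \in C6 F.
  move=> x0; rewrite /cls; case: pickP => [i //|/= h].
  by have [i hi] := cov x x0; rewrite h in hi.
have clsE x y : x != 0 -> y != 0 -> cls x = cls y -> same_coset6 x y.
  move=> x0 y0 e; have := C6_div (clsP x x0) (clsP y y0).
  rewrite e /same_coset6; have zi : z ^+ (cls y) != 0.
    by apply: contraTneq (clsP y y0) => ->; rewrite invr0 mulr0; apply/negP => /C6_neq0; rewrite eqxx.
  by rewrite invf_div mulrA divfK.
move=> /andP[nz pw].
have : uniq (map cls s).
  elim: s nz pw => //= x s IH /andP[x0 nz]; move=> /andP[hx pw].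
  rewrite IH // andbT; apply/mapP => -[y ys e].
  have y0 : y != 0 by apply: (allP nz).
  by move: (allP hx y ys); rewrite clsE.
move/card_uniqP; rewrite size_map => <-.
by apply: leq_trans (max_card _) _; rewrite card_ord.
Qed.

Lemma complete_cover {F : finFieldType} (z : F) :
  (forall x : F, x != 0 -> exists i : 'I_6, x / z ^+ i \in C6 F) ->
  forall (s : seq F) (d : F), complete_rep6 s -> d != 0 ->
  exists2 e, e \in s & same_coset6 d e.
Proof.
move=> cov s d /andP[/eqP sz /andP[nz pw]] d0.
apply/hasP; apply: contraT; rewrite -all_predC => h.
have := @pigeon _ _ cov (d :: s); rewrite /distinct_cosets6 /= d0 nz pw sz.
by rewrite (sub_all _ h) //= => /(_ isT).
Qed.

Lemma dc_inj {F : finFieldType} (T : eqType) (f : T -> F) (l : seq T) (p1 p2 : T) :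
  distinct_cosets6 (map f l) -> p1 \in l -> p2 \in l ->
  same_coset6 (f p1) (f p2) -> p1 = p2.
Proof.
move=> /andP[_ pw]; elim: l pw => //= x l IH.
move=> /andP[hx pw].
rewrite !inE => /orP[/eqP->|h1] /orP[/eqP->|h2] // hs.
- by have := allP hx _ (map_f f h2); rewrite hs.
- by have := allP hx _ (map_f f h1); rewrite (same_sym hs).
- exact: IH.
Qed.


Definition L := (bool * bool)%type.
Definition ladd (x y : L) : L := (addb x.1 y.1, addb x.2 y.2).
Definition lev (i : nat) : L :=
  match i with
  | 3 | 7 | 13 => (false, true)
  | 4 | 8 | 14 => (true, false)
  | 10 | 11 | 12 | 15 | 16 => (true, true)
  | _ => (false, false)
  end%N.
Definition Dl (g : L) : seq (nat * nat) :=
  match g with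
  | (false, false) => [:: (1,2); (5,6); (10,11); (10,12); (11,12); (15,16)]
  | (false, true) => [:: (1,3); (2,3); (5,7); (6,7); (14,15); (14,16)]
  | (true, false) => [:: (1,4); (2,4); (5,8); (6,8); (13,15); (13,16)]
  | (true, true) => [:: (3,4); (7,8); (9,10); (9,11); (9,12); (13,14)]
  end%N.
Definition Ul (g : L) : seq nat :=
  match g with
  | (false, false) => [:: 1; 2; 5; 6; 9]
  | (false, true) => [:: 3; 7; 13]
  | (true, false) => [:: 4; 8; 14]
  | (true, true) => [:: 10; 11; 12; 15; 16]
  end%N.
Definition pos (j : nat) : seq nat := iota (4 * j + 1) 4.
Definition allL : seq L := [:: (false,false); (false,true); (true,false); (true,true)].

Lemma allLP (g : L) : g \in allL.
Proof. by case: g => [[] []]. Qed.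

Lemma cover2_b : all (fun j => all (fun i => all (fun i' => (i != i') ==>
   (((i, i') \in Dl (ladd (lev i) (lev i'))) || ((i', i) \in Dl (ladd (lev i) (lev i')))))
   (pos j)) (pos j)) (iota 0 4).
Proof. by []. Qed.

Lemma cover2 (j i i' : nat) : (j < 4)%N -> i \in pos j -> i' \in pos j -> i != i' ->
  ((i, i') \in Dl (ladd (lev i) (lev i'))) || ((i', i) \in Dl (ladd (lev i) (lev i'))).
Proof.
move=> j4 hi hi' ne.
have := allP cover2_b j; rewrite mem_iota add0n => /(_ j4) /allP /(_ i hi) /allP /(_ i' hi').
by rewrite ne.
Qed.

Lemma dl_b : all (fun g => all (fun p => has (fun j => (p.1 \in pos j) && (p.2 \in pos j)) (iota 0 4)
   && (ladd (lev p.1) (lev p.2) == g)) (Dl g)) allL.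
Proof. by []. Qed.

Lemma dlP (g : L) (p : nat * nat) : p \in Dl g ->
  (exists2 j, (j < 4)%N & (p.1 \in pos j) && (p.2 \in pos j)) /\ ladd (lev p.1) (lev p.2) = g.
Proof.
move=> hp; have := allP dl_b g (allLP g) => /allP /(_ p hp) /andP[/hasP[j]].
rewrite mem_iota add0n => j4 hj /eqP e; split => //; by exists j.
Qed.

Lemma ul_b : all (fun i => i \in Ul (lev i)) (iota 1 16).
Proof. by []. Qed.

Lemma ulP (j i : nat) : (j < 4)%N -> i \in pos j -> i \in Ul (lev i).
Proof.
move=> j4 hi; apply: (allP ul_b); move: hi; rewrite !mem_iota; lia.
Qed.


Definition Rh {F : finFieldType} (c : F) : bool :=
  (c \in C6 F) && (enum_rank c < enum_rank (- c))%N.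
Definition dif {F : finFieldType} (a : nat -> F) (p : nat * nat) : F := a p.1 - a p.2.
Definition Hyp {F : finFieldType} (a : nat -> F) : Prop :=
  [/\ -1 \in C6 F, (1 : F) != -1,
      forall (s : seq F) (d : F), complete_rep6 s -> d != 0 -> exists2 e, e \in s & same_coset6 d e,
      forall g, complete_rep6 (map (dif a) (Dl g)) &
      forall g, partial_rep6 (map a (Ul g))].

Lemma Rh_C6 {F : finFieldType} (c : F) : Rh c -> c \in C6 F.
Proof. by case/andP. Qed.

Lemma Rh_excl {F : finFieldType} (c : F) : Rh c -> Rh (- c) -> False.
Proof. move=> /andP[_ h1]; rewrite /Rh opprK => /andP[_ h2]. by have := ltn_trans h1 h2; rewrite ltnn. Qed.

Lemma neg_neq {F : finFieldType} (c : F) : (1 : F) != -1 -> c != 0 -> - c != c.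
Proof.
move=> two c0; apply/negP => /eqP h.
have : (c * (1 + 1) == 0) by rewrite mulrDr mulr1 -{1}h addNr.
rewrite mulf_eq0 (negPf c0) /= addr_eq0 => h2; by rewrite h2 in two.
Qed.

Lemma Rh_opp {F : finFieldType} (c : F) : -1 \in C6 F -> (1 : F) != -1 -> c \in C6 F ->
  Rh c || Rh (- c).
Proof.
move=> m1 two hc; rewrite /Rh opprK hc /=.
have hc' : - c \in C6 F by have := C6_mul m1 hc; rewrite mulN1r.
rewrite hc' /=.
have : enum_rank c != enum_rank (- c).
  by rewrite (inj_eq enum_rank_inj) eq_sym neg_neq // C6_neq0.
move=> /eqP ne; apply/orP.
case: (ltngtP (enum_rank c) (enum_rank (- c))) => h; [by left | by right |].
by case: ne; apply: val_inj.
Qed.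

Definition Idx (F : finFieldType) := (('I_4 * F * F * L) + F)%type.
Definition pt {F : finFieldType} (a : nat -> F) (c t : F) (k : L) (i : nat) : F * L :=
  (c * a i + t, ladd (lev i) k).
Definition blkT {F : finFieldType} (a : nat -> F) (x : Idx F) : {set F * L} :=
  match x with
  | inl (j, c, t, k) => [set p in map (pt a c t k) (pos j)]
  | inr t => [set p : F * L | p.1 == t]
  end.
Definition phiT {F : finFieldType} (x : Idx F) : F * L :=
  match x with
  | inl (_, _, t, k) => (t, k)
  | inr t => (t + 1, (false, false))
  end.
Definition validx {F : finFieldType} (x : Idx F) : bool :=
  match x with
  | inl (_, c, _, _) => Rh c
  | inr _ => true
  end.

Lemma mem_blkD {F : finFieldType} (a : nat -> F) j c t k p :
  (p \in blkT a (inl (j, c, t, k))) = (p \in map (pt a c t k) (pos j)).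
Proof. by rewrite inE. Qed.

Lemma mem_blkS {F : finFieldType} (a : nat -> F) t p :
  (p \in blkT a (inr t)) = (p.1 == t).
Proof. by rewrite inE. Qed.

Lemma laddK (x k : L) : ladd (ladd x k) k = x.
Proof. by case: x k => [[] []] [[] []]. Qed.
Lemma laddC (x y : L) : ladd x y = ladd y x.
Proof. by case: x y => [[] []] [[] []]. Qed.
Lemma laddI (x y k : L) : ladd x k = ladd y k -> x = y.
Proof. by case: x y k => [[] []] [[] []] [[] []]. Qed.
Lemma ladd_pair (x y k m : L) : ladd x k = ladd y m -> ladd x y = ladd k m.
Proof. by case: x y k m => [[] []] [[] []] [[] []] [[] []]. Qed.
Lemma ladd_sol (x y h h' : L) : ladd x y = ladd h h' -> ladd y (ladd h x) = h'.
Proof. by case: x y h h' => [[] []] [[] []] [[] []] [[] []]. Qed.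

Lemma ladd_c2 (x x' k : L) : ladd (ladd x k) (ladd x' k) = ladd x x'.
Proof. by case: x x' k => [[] []] [[] []] [[] []]. Qed.

Lemma pos_uniq (j j2 i : nat) : i \in pos j -> i \in pos j2 -> j = j2.
Proof. rewrite !mem_iota; lia. Qed.

Lemma dif_nz {F : finFieldType} (a : nat -> F) g p : Hyp a -> p \in Dl g -> dif a p != 0.
Proof.
case=> _ _ _ hD _ hp; have /andP[_ /andP[nz _]] := hD g.
by apply: (allP nz); apply: map_f.
Qed.

Lemma a_nz {F : finFieldType} (a : nat -> F) j i : Hyp a -> (j < 4)%N -> i \in pos j -> a i != 0.
Proof.
case=> _ _ _ _ hU j4 hi; have /andP[/andP[nz _] _] := hU (lev i).
by apply: (allP nz); apply: map_f; apply: ulP j4 hi.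
Qed.

Lemma a_notC6 {F : finFieldType} (a : nat -> F) j i : Hyp a -> (j < 4)%N -> i \in pos j -> a i \notin C6 F.
Proof.
case=> _ _ _ _ hU j4 hi; have /andP[_ nc] := hU (lev i).
by apply: (allP nc); apply: map_f; apply: ulP j4 hi.
Qed.

Lemma a_inj {F : finFieldType} (a : nat -> F) j i i' : Hyp a -> (j < 4)%N ->
  i \in pos j -> i' \in pos j -> a i = a i' -> i = i'.
Proof.
move=> H j4 hi hi' e; apply/eqP; apply: contraT => ne.
case/orP: (cover2 j4 hi hi' ne) => /(dif_nz H); rewrite /dif /= e subrr eqxx //.
Qed.

Lemma pt_inj {F : finFieldType} (a : nat -> F) j c t k i i' : Hyp a -> (j < 4)%N -> c != 0 ->
  i \in pos j -> i' \in pos j -> pt a c t k i = pt a c t k i' -> i = i'.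
Proof.
move=> H j4 c0 hi hi' /(congr1 fst) /= /addIr /(mulfI c0) e; exact: (a_inj H j4 hi hi' e).
Qed.

Lemma ex_sub {F : finFieldType} (a : nat -> F) (j i i' : nat) (c u u' : F) (h h' : L) :
  (j < 4)%N -> i \in pos j -> i' \in pos j -> Rh c -> c * (a i' - a i) = u' - u ->
  ladd (lev i) (lev i') = ladd h h' ->
  exists x : Idx F, [&& validx x, (u, h) \in blkT a x & (u', h') \in blkT a x].
Proof.
move=> j4 hi hi' hc e el.
exists (inl (Ordinal j4, c, u - c * a i, ladd h (lev i))).
apply/and3P; split; first exact: hc.
  rewrite mem_blkD; apply/mapP; exists i => //; rewrite /pt laddC laddK; congr (_, _); ring.
rewrite mem_blkD; apply/mapP; exists i' => //; rewrite /pt (ladd_sol el); congr (_, _).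
by rewrite -[u'](subrK u) -e; ring.
Qed.

Lemma bibd_ex {F : finFieldType} (a : nat -> F) (P Q : F * L) : Hyp a -> P != Q ->
  exists x : Idx F, [&& validx x, P \in blkT a x & Q \in blkT a x].
Proof.
move=> H; case: (H) => m1 two cov hD _.
case: P Q => [u h] [u' h'] ne.
have [eu|neu] := eqVneq u u'.
  by exists (inr u); apply/and3P; split => //; rewrite mem_blkS /= ?eu eqxx.
have d0 : u' - u != 0 by rewrite subr_eq0 eq_sym.
have [e /mapP[p hp ->] hs] := cov _ _ (hD (ladd h h')) d0.
have [[j j4 /andP[h1 h2]] hl] := dlP hp.
have dnz := dif_nz H hp.
have hc : (u' - u) / dif a p \in C6 F by [].
case/orP: (Rh_opp m1 two hc) => hR.
  apply: (ex_sub j4 h2 h1 hR); first by rewrite /dif in dnz *; rewrite divfK.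
  by rewrite laddC hl.
apply: (ex_sub j4 h1 h2 hR); last by rewrite hl.
by rewrite /dif in dnz *; rewrite mulNr -mulrN opprB divfK.
Qed.

Lemma blkDP {F : finFieldType} (a : nat -> F) j c t k p :
  p \in blkT a (inl (j, c, t, k)) -> exists2 i, i \in pos j & p = pt a c t k i.
Proof. by rewrite mem_blkD => /mapP. Qed.

Lemma same_opp2 {F : finFieldType} (x y : F) : -1 \in C6 F ->
  same_coset6 x y -> same_coset6 (- x) y.
Proof. by move=> m1 h; apply: same_sym; rewrite same_oppr //; apply: same_sym. Qed.

Lemma ord_eq4 (j j2 : 'I_4) : nat_of_ord j = nat_of_ord j2 -> j = j2.
Proof. exact: val_inj. Qed.

Lemma dd_un {F : finFieldType} (a : nat -> F) (j j2 : nat) (c c2 t t2 : F) (k k2 : L)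
  (i i' i2 i2' : nat) : Hyp a -> Rh c -> Rh c2 -> (j < 4)%N -> (j2 < 4)%N ->
  i \in pos j -> i' \in pos j -> i2 \in pos j2 -> i2' \in pos j2 -> i != i' ->
  pt a c t k i = pt a c2 t2 k2 i2 -> pt a c t k i' = pt a c2 t2 k2 i2' ->
  [/\ j = j2, c = c2, t = t2 & k = k2].
Proof.
move=> H hc hc2 j4 j24 hi hi' hi2 hi2' ne e1 e2.
have /= E1 := congr1 fst e1; have /= L1 := congr1 snd e1.
have /= E2 := congr1 fst e2; have /= L2 := congr1 snd e2.
case: (H) => m1 two _ hD _.
have c0 : c != 0 by apply: C6_neq0; apply: Rh_C6.
have c20 : c2 != 0 by apply: C6_neq0; apply: Rh_C6.
have ne2 : i2 != i2'.
  apply: contra ne => /eqP ee; subst i2'.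
  apply/eqP; apply: (a_inj H j4 hi hi'); apply: (mulfI c0); apply: (addIr t).
  by rewrite E1 E2.
have KE : c * (a i - a i') = c2 * (a i2 - a i2').
  have -> : c * (a i - a i') = (c * a i + t) - (c * a i' + t) by ring.
  by rewrite E1 E2; ring.
have G2 : ladd (lev i) (lev i') = ladd (lev i2) (lev i2').
  by rewrite -(ladd_c2 (lev i) (lev i') k) L1 L2 ladd_c2.
have d0 : a i - a i' != 0 by rewrite subr_eq0; apply/eqP => /(a_inj H j4 hi hi') /eqP; rewrite (negPf ne).
have d20 : a i2 - a i2' != 0 by rewrite subr_eq0; apply/eqP => /(a_inj H j24 hi2 hi2') /eqP; rewrite (negPf ne2).
have S : same_coset6 (a i - a i') (a i2 - a i2').
  rewrite /same_coset6.
  have -> : (a i - a i') / (a i2 - a i2') = c2 / c.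
    by apply: (mulIf d20); rewrite divfK // [RHS]mulrAC -KE [RHS]mulrAC mulfV // mul1r.
  by apply: C6_div; apply: Rh_C6.
have sgn (x y : F) : same_coset6 x y -> same_coset6 (-x) y /\ same_coset6 x (-y) /\ same_coset6 (-x) (-y).
  move=> hxy; split; first exact: same_opp2.
  by rewrite !same_oppr //; split => //; apply: same_opp2.
set g := ladd (lev i) (lev i').
have C1 := cover2 j4 hi hi' ne.
have C2 := cover2 j24 hi2 hi2' ne2; rewrite -G2 -/g in C2.
have key : forall q q2, q \in Dl g -> q2 \in Dl g ->
    (q = (i, i') \/ q = (i', i)) -> (q2 = (i2, i2') \/ q2 = (i2', i2)) -> q = q2.
  move=> q q2 hq hq2 eq eq2.
  have dcg : distinct_cosets6 (map (dif a) (Dl g)) by case/andP: (hD g).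
  apply: (dc_inj dcg hq hq2).
  have [s1 [s2 s3]] := sgn _ _ S.
  have o1 : a i' - a i = -(a i - a i') by rewrite opprB.
  have o2 : a i2' - a i2 = -(a i2 - a i2') by rewrite opprB.
  by case: eq eq2 => -> [] ->; rewrite /dif /= ?o1 ?o2.
have E : i = i2 /\ i' = i2' \/ i = i2' /\ i' = i2.
  case/orP: C1 => hq; case/orP: C2 => hq2.
  - by have [-> ->] := key _ _ hq hq2 (or_introl erefl) (or_introl erefl); left.
  - by have [-> ->] := key _ _ hq hq2 (or_introl erefl) (or_intror erefl); right.
  - by have [-> ->] := key _ _ hq hq2 (or_intror erefl) (or_introl erefl); right.
  - by have [-> ->] := key _ _ hq hq2 (or_intror erefl) (or_intror erefl); left.
case: E => [[ei ei'] | [ei ei']]; subst i2 i2'.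
  have cc : c = c2 by apply: (mulIf d0).
  subst c2; split => //.
  - exact: pos_uniq hi hi2.
  - by apply: (addrI (c * a i)).
  - by apply: (laddI (x := k) (y := k2) (k := lev i)); rewrite laddC L1 laddC.
exfalso; have cc : c2 = - c.
  apply: (mulIf d0); rewrite mulNr KE -mulrN opprB //.
by rewrite cc in hc2; apply: (Rh_excl hc hc2).
Qed.

Lemma dev_fst {F : finFieldType} (a : nat -> F) (j : 'I_4) c t k (P Q : F * L) : Hyp a -> Rh c ->
  P \in blkT a (inl (j, c, t, k)) -> Q \in blkT a (inl (j, c, t, k)) -> P != Q -> P.1 != Q.1.
Proof.
move=> H hc /blkDP[i hi ->] /blkDP[i' hi' ->].
have c0 : c != 0 by apply: C6_neq0; apply: Rh_C6.
apply: contra => /eqP /= /addIr /(mulfI c0) /(a_inj H (ltn_ord j) hi hi') ->.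
by rewrite eqxx.
Qed.

Lemma bibd_un {F : finFieldType} (a : nat -> F) (P Q : F * L) (x y : Idx F) : Hyp a -> P != Q ->
  validx x -> validx y -> P \in blkT a x -> Q \in blkT a x -> P \in blkT a y -> Q \in blkT a y -> x = y.
Proof.
move=> H ne.
case: x => [[[[j c] t] k] | t]; case: y => [[[[j2 c2] t2] k2] | t2] /= vx vy.
- move=> hPx hQx hPy hQy.
  have [i hi eP] := blkDP hPx; have [i' hi' eQ] := blkDP hQx.
  have [i2 hi2 eP2] := blkDP hPy; have [i2' hi2' eQ2] := blkDP hQy.
  have nei : i != i' by apply: contra ne => /eqP ee; rewrite eP eQ ee.
  have [ej -> -> ->] := dd_un H vx vy (ltn_ord j) (ltn_ord j2) hi hi' hi2 hi2' nei
     (etrans (esym eP) eP2) (etrans (esym eQ) eQ2).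
  by rewrite (val_inj ej).
- move=> hPx hQx; rewrite !inE => /eqP e1 /eqP e2.
  by have := dev_fst H vx hPx hQx ne; rewrite e1 e2 eqxx.
- move=> hPx hQx hPy hQy; move: hPx hQx; rewrite !inE => /eqP e1 /eqP e2.
  by have := dev_fst H vy hPy hQy ne; rewrite e1 e2 eqxx.
- by rewrite !inE => /eqP <- _ /eqP <-.
Qed.

Definition Nrel {F : finFieldType} (a : nat -> F) (P Q : F * L) (x : Idx F) : bool :=
  (phiT x == P) && (Q \in blkT a x).

Lemma ladd_sym2 (x y h h' : L) : h' = ladd x h -> h = ladd y h' -> x = y.
Proof. by case: x y h h' => [[] []] [[] []] [[] []] [[] []]. Qed.

Lemma not_pm1 {F : finFieldType} (a : nat -> F) j i c : Hyp a -> Rh c -> (j < 4)%N -> i \in pos j ->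
  c * a i = 1 \/ c * a i = -1 -> False.
Proof.
move=> H hc j4 hi e; case: (H) => m1 _ _ _ _.
have c0 : c != 0 by apply: C6_neq0; apply: Rh_C6.
have hci : c^-1 \in C6 F by apply: C6_inv; apply: Rh_C6.
have := a_notC6 H j4 hi; apply/negP/negPn.
case: e => e.
  by have -> : a i = c^-1 by apply: (mulfI c0); rewrite e mulfV.
have -> : a i = -1 * c^-1 by apply: (mulfI c0); rewrite e mulrCA mulfV // mulr1.
exact: C6_mul.
Qed.

Lemma same_ai {F : finFieldType} (a : nat -> F) j j2 i i2 : Hyp a -> (j < 4)%N -> (j2 < 4)%N ->
  i \in pos j -> i2 \in pos j2 -> lev i = lev i2 -> same_coset6 (a i) (a i2) -> i = i2.
Proof.
move=> H j4 j24 hi hi2 el hs; case: (H) => _ _ _ _ hU.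
have dc : distinct_cosets6 (map a (Ul (lev i))) by case/andP: (hU (lev i)).
apply: (dc_inj dc (ulP j4 hi)); last exact: hs.
by rewrite el; apply: (ulP j24 hi2).
Qed.

Lemma n1_un {F : finFieldType} (a : nat -> F) (P Q : F * L) (x y : Idx F) : Hyp a ->
  validx x -> validx y -> Nrel a P Q x -> Nrel a P Q y -> x = y.
Proof.
move=> H; case: (H) => m1 two _ _ _.
case: P Q => [u h] [u' h'].
case: x => [[[[j c] t] k] | t]; case: y => [[[[j2 c2] t2] k2] | t2] vx vy;
  rewrite /Nrel /= => /andP[/eqP ex hx] /andP[/eqP ey hy].
- case: ex => ??; case: ey => ??; subst t k t2 k2.
  have [i hi eQ] := blkDP hx; have [i2 hi2 eQ2] := blkDP hy.
  rewrite eQ in eQ2; have /= /addIr E := congr1 fst eQ2; have /= /laddI el := congr1 snd eQ2.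
  have c0 : c != 0 by apply: C6_neq0; apply: Rh_C6.
  have c20 : c2 != 0 by apply: C6_neq0; apply: Rh_C6.
  have ai2 : a i2 != 0 := a_nz H (ltn_ord j2) hi2.
  have hs : same_coset6 (a i) (a i2).
    rewrite /same_coset6; have -> : a i / a i2 = c2 / c.
      by apply: (mulIf ai2); rewrite divfK // mulrAC -E mulrAC mulfV // mul1r.
    by apply: C6_div; apply: Rh_C6.
  have ei := same_ai H (ltn_ord j) (ltn_ord j2) hi hi2 el hs; subst i2.
  have ai : a i != 0 := a_nz H (ltn_ord j) hi.
  have cc : c = c2 by apply: (mulIf ai).
  subst c2; by rewrite (val_inj (pos_uniq hi hi2)).
- exfalso; case: ex => ??; subst t k.
  have [i hi eQ] := blkDP hx; move: hy; rewrite inE eQ /= => /eqP e.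
  case: ey => ??; subst u.
  apply: (not_pm1 H vx (ltn_ord j) hi); right.
  by apply: (addIr (t2 + 1)); rewrite e; ring.
- exfalso; case: ey => ??; subst t2 k2.
  have [i hi eQ] := blkDP hy; move: hx; rewrite inE eQ /= => /eqP e.
  case: ex => ??; subst u.
  apply: (not_pm1 H vy (ltn_ord j2) hi); right.
  by apply: (addIr (t + 1)); rewrite e; ring.
- case: ex => e1 _; case: ey => e2 _; rewrite -e2 in e1; by move/addIr: e1 => ->.
Qed.

Lemma n2_un {F : finFieldType} (a : nat -> F) (P Q : F * L) (x y : Idx F) : Hyp a ->
  validx x -> validx y -> Nrel a P Q x -> Nrel a Q P y -> False.
Proof.
move=> H; case: (H) => m1 two _ _ _.
case: P Q => [u h] [u' h'].
case: x => [[[[j c] t] k] | t]; case: y => [[[[j2 c2] t2] k2] | t2] vx vy;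
  rewrite /Nrel /= => /andP[/eqP ex hx] /andP[/eqP ey hy].
- case: ex => ??; case: ey => ??; subst t k t2 k2.
  have [i hi eQ] := blkDP hx; have [i2 hi2 eP] := blkDP hy.
  have /= E1 := congr1 fst eQ; have /= L1 := congr1 snd eQ.
  have /= E2 := congr1 fst eP; have /= L2 := congr1 snd eP.
  have el := ladd_sym2 L1 L2.
  have E : c * a i = - (c2 * a i2).
    have : c * a i + c2 * a i2 = 0 by apply: (addIr u); rewrite add0r {2}E2 E1; ring.
    by move/eqP; rewrite addr_eq0 => /eqP.
  have c0 : c != 0 by apply: C6_neq0; apply: Rh_C6.
  have ai2 : a i2 != 0 := a_nz H (ltn_ord j2) hi2.
  have hs : same_coset6 (a i) (a i2).
    rewrite /same_coset6; have -> : a i / a i2 = - c2 / c.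
      by apply: (mulIf ai2); rewrite divfK // mulrAC mulNr -E mulrAC mulfV // mul1r.
    apply: C6_div; last by apply: Rh_C6.
    by rewrite -mulN1r; apply: C6_mul => //; apply: Rh_C6.
  have ei := same_ai H (ltn_ord j) (ltn_ord j2) hi hi2 el hs; subst i2.
  have ai : a i != 0 := a_nz H (ltn_ord j) hi.
  have cc : c = - c2 by apply: (mulIf ai); rewrite E mulNr.
  subst c; exact: (Rh_excl vy vx).
- case: ex => ??; subst t k.
  have [i hi eQ] := blkDP hx; move: hy; rewrite inE /= => /eqP e.
  case: ey => e2 ?; subst u.
  have /= E1 := congr1 fst eQ.
  apply: (not_pm1 H vx (ltn_ord j) hi); left.
  by apply: (addIr t2); rewrite -E1 -e2; ring.
- case: ey => ??; subst t2 k2.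
  have [i hi eP] := blkDP hy; move: hx; rewrite inE /= => /eqP e.
  case: ex => e2 ?; subst u'.
  have /= E1 := congr1 fst eP.
  apply: (not_pm1 H vy (ltn_ord j2) hi); left.
  by apply: (addIr t); rewrite -E1 -e2; ring.
- move: hx hy; rewrite !inE /= => /eqP e1 /eqP e2.
  case: ex => ex _; case: ey => ey _.
  move: two; rewrite -subr_eq0 opprK; apply/negP; apply/negPn/eqP.
  by apply: (addrI t); rewrite addr0 addrA ex e2 ey e1.
Qed.

Lemma card_blk {F : finFieldType} (a : nat -> F) (x : Idx F) : Hyp a -> validx x -> #|blkT a x| = 4.
Proof.
move=> H; case: x => [[[[j c] t] k] | t] vx.
  have c0 : c != 0 by apply: C6_neq0; apply: Rh_C6.
  have U : uniq (map (pt a c t k) (pos j)).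
    rewrite map_inj_in_uniq ?iota_uniq //.
    by move=> i i' hi hi'; apply: (pt_inj H (ltn_ord j) c0 hi hi').
  by rewrite /blkT cardsE; move/card_uniqP: U => ->; rewrite size_map size_iota.
have -> : blkT a (inr t) = (fun l : L => (t, l)) @: [set: L].
  apply/setP => -[u l]; rewrite inE /=; apply/eqP/imsetP => [-> | [l' _ [-> _]]] //.
  by exists l; rewrite ?inE.
by rewrite card_imset ?cardsT ?card_prod ?card_bool // => l1 l2 [].
Qed.

Lemma phi_notin {F : finFieldType} (a : nat -> F) (x : Idx F) : Hyp a -> validx x -> phiT x \notin blkT a x.
Proof.
move=> H; case: x => [[[[j c] t] k] | t] vx.
  apply/negP => /blkDP[i hi] /(congr1 fst) /= /eqP.
  rewrite eq_sym -subr_eq0 addrK mulf_eq0 (negPf (C6_neq0 (Rh_C6 vx))) /=.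
  by rewrite (negPf (a_nz H (ltn_ord j) hi)).
by rewrite mem_blkS /= -subr_eq0 addrAC subrr add0r oner_eq0.
Qed.

Lemma count_one (T : eqType) (p : pred T) (s : seq T) : uniq s ->
  (exists2 x, x \in s & p x) -> {in s &, forall x y, p x -> p y -> x = y} -> count p s = 1%N.
Proof.
elim: s => [|z s IH] //=; first by move=> _ [].
move=> /andP[zs us] [x]; rewrite inE => /orP[/eqP -> pz|xs px] hu.
  rewrite pz; congr (_ + _)%N; apply/eqP; rewrite -leqn0 leqNgt -has_count.
  apply/hasP => -[y ys py]; have := hu z y; rewrite inE eqxx inE ys orbT => /(_ isT isT pz py) e.
  by rewrite e ys in zs.
case pz: (p z).
  have xs' : x \in z :: s by rewrite inE xs orbT.
  by have e := hu z x (mem_head _ _) xs' pz px; rewrite e xs in zs.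
rewrite IH //; first by exists x.
by move=> u v us' vs'; apply: hu; rewrite inE ?us' ?vs' orbT.
Qed.

Lemma count_le1 (T : eqType) (p : pred T) (s : seq T) : uniq s ->
  {in s &, forall x y, p x -> p y -> x = y} -> (count p s <= 1)%N.
Proof.
move=> us hu; case: (boolP (has p s)) => [/hasP[x xs px] | ].
  by rewrite (count_one us _ hu) //; exists x.
by rewrite has_count -leqNgt leqn0 => /eqP ->.
Qed.

Lemma construct {F : finFieldType} (a : nat -> F) : Hyp a -> exists_nested_BIBD (4 * #|F|).
Proof.
move=> H.
have e : #|{: F * L}| = (4 * #|F|)%N by rewrite card_prod /L card_prod card_bool mulnC.
pose f (p : F * L) : 'I_(4 * #|F|) := cast_ord e (enum_rank p).
pose g (x : 'I_(4 * #|F|)) : F * L := enum_val (cast_ord (esym e) x).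
have fK : cancel g f by move=> x; rewrite /f /g enum_valK cast_ordKV.
have finj : injective f by move=> p q /cast_ord_inj /enum_rank_inj.
have memf (A : {set F * L}) x : (x \in f @: A) = (g x \in A) by rewrite -{1}(fK x) mem_imset.
pose Ix := [seq x <- enum {: Idx F} | validx x].
have uIx : uniq Ix by rewrite filter_uniq ?enum_uniq.
have memIx x : (x \in Ix) = validx x by rewrite mem_filter mem_enum andbT.
exists (map (fun x => f @: blkT a x) Ix); split.
  split.
    apply/allP => A /mapP[x]; rewrite memIx => vx ->.
    by rewrite card_imset // card_blk.
  move=> x y nxy; rewrite count_map.
  have nXY : g x != g y by apply: contra nxy => /eqP /(congr1 f); rewrite !fK => ->.
  apply: count_one => //=.
    have [z /and3P[vz h1 h2]] := bibd_ex H nXY.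
    by exists z; rewrite ?memIx //= !memf h1 h2.
  move=> u v; rewrite !memIx => vu vv /=; rewrite !memf => /andP[h1 h2] /andP[h3 h4].
  exact: (bibd_un H nXY vu vv h1 h2 h3 h4).
exists (map (fun x => f (phiT x)) Ix); split; first by rewrite !size_map.
rewrite zip_map; split.
  apply/allP => p /mapP[x]; rewrite memIx => vx -> /=.
  by rewrite mem_imset // phi_notin.
rewrite -map_comp; split.
  apply/allP => A /mapP[x]; rewrite memIx => vx -> /=.
  rewrite -imset_set1 -imsetU card_imset // setUC cardsU1 card_blk //.
  by rewrite phi_notin.
move=> x y nxy; rewrite count_map.
have nXY : g x != g y by apply: contra nxy => /eqP /(congr1 f); rewrite !fK => ->.
set X := g x; set Y := g y.
pose p1 (z : Idx F) := (X \in blkT a z) && (Y \in blkT a z).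
pose p2 (z : Idx F) := Nrel a X Y z || Nrel a Y X z.
apply: (@leq_trans (count (predU p1 p2) Ix)).
  apply: sub_count => z /=; rewrite -imset_set1 -imsetU !memf !inE -/X -/Y.
  case/andP => /orP[hX | /eqP eX] /orP[hY | /eqP eY].
  - by apply/orP; left; rewrite /p1 hX hY.
  - by apply/orP; right; rewrite /p2 /Nrel -eY eqxx hX /= orbT.
  - by apply/orP; right; rewrite /p2 /Nrel -eX eqxx hY.
  - by move: nXY; rewrite -/X -/Y eX eY eqxx.
apply: (@leq_trans (count p1 Ix + count p2 Ix)).
  by rewrite -count_predUI leq_addr.
have -> : count p1 Ix = 1%N.
  apply: count_one => //=.
    have [z /and3P[vz h1 h2]] := bibd_ex H nXY.
    by exists z; rewrite ?memIx // /p1 h1 h2.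
  move=> u v; rewrite !memIx => vu vv /andP[h1 h2] /andP[h3 h4].
  exact: (bibd_un H nXY vu vv h1 h2 h3 h4).
rewrite (_ : 2 = 1 + 1)%N // leq_add2l.
apply: count_le1 => // u v; rewrite !memIx => vu vv /orP[h1|h1] /orP[h2|h2].
- exact: n1_un H vu vv h1 h2.
- by case: (n2_un H vu vv h1 h2).
- by case: (n2_un H vv vu h2 h1).
- exact: n1_un H vu vv h1 h2.
Qed.


Unset Implicit Arguments.

Theorem mainTheorem17 (F : finFieldType) (n : nat) (a : nat -> F) :
  #|F| = (12 * n + 1)%N ->
  (forall i : nat, (1 <= i <= 16)%N -> a i != 0) ->
  complete_rep6 [:: a 1%N - a 2%N; a 5%N - a 6%N; a 10%N - a 11%N; a 10%N - a 12%N; a 11%N - a 12%N; a 15%N - a 16%N] ->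
  complete_rep6 [:: a 1%N - a 3%N; a 2%N - a 3%N; a 5%N - a 7%N; a 6%N - a 7%N; a 14%N - a 15%N; a 14%N - a 16%N] ->
  complete_rep6 [:: a 1%N - a 4%N; a 2%N - a 4%N; a 5%N - a 8%N; a 6%N - a 8%N; a 13%N - a 15%N; a 13%N - a 16%N] ->
  complete_rep6 [:: a 3%N - a 4%N; a 7%N - a 8%N; a 9%N - a 10%N; a 9%N - a 11%N; a 9%N - a 12%N; a 13%N - a 14%N] ->
  partial_rep6 [:: a 1%N; a 2%N; a 5%N; a 6%N; a 9%N] ->
  partial_rep6 [:: a 3%N; a 7%N; a 13%N] ->
  partial_rep6 [:: a 4%N; a 8%N; a 14%N] ->
  partial_rep6 [:: a 10%N; a 11%N; a 12%N; a 15%N; a 16%N] ->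
  exists_nested_BIBD (4 * #|F|).
Proof.
move=> hF _ d00 d01 d10 d11 u00 u01 u10 u11.
have [_ m1 two [z cov]] := group_facts hF.
apply: (construct (a := a)); split => //.
- by move=> s d hs d0; apply: (complete_cover cov hs d0).
- case=> [[] []]; [exact d11 | exact d10 | exact d01 | exact d00].
- case=> [[] []]; [exact u11 | exact u10 | exact u01 | exact u00].
Qed.
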